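(* Let $1\le d\le n$ be integers with $\gcd(n,d)=1$ and $d^2\equiv 1\pmod n$. Let $n=n'm$ with $n',m$ positive integers and $m$ odd, and let $1\le d'\le n'$ with $d'\equiv d\pmod{n'}$. Then $(n,d)$ is a critical pair if and only if $(n',d')$ is a critical pair.
   Context: A pair of positive integers $(n,d)$ with $d<n$ and $\gcd(n,d)=1$ is a critical pair if the Hirzebruch–Jung expansion $(a_0,\dots,a_r)$ of $n/d$ (defined by $\frac nd=a_0-1/(a_1-1/(\cdots-1/a_r))$, $a_i\ge2$) is symmetric ($a_i=a_{r-i}$ for all $i$), of odd length ($r$ even), and has even central term $a_{r/2}$. A pair $(n,d)$ with $d=n$ (i.e. $(1,1)$) is not critical. *)

(* Defs.v *)
From mathcomp Require Import all_boot all_order all_algebra.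
Set Implicit Arguments. Unset Strict Implicit. Unset Printing Implicit Defensive.
Import Order.TTheory GRing.Theory Num.Theory.

Local Open Scope ring_scope.

Fixpoint hjval (a : seq nat) : rat :=
  match a with
  | [::] => 0
  | [:: x] => x%:R
  | x :: s => x%:R - (hjval s)^-1
  end.

Definition is_HJ_expansion (n d : nat) (a : seq nat) : Prop :=
  [/\ size a != 0%N, all (fun x => 1 < x)%N a & hjval a = n%:R / d%:R].

Definition critical_pair (n d : nat) : Prop :=
  [/\ (0 < d)%N, (d < n)%N, coprime n d &
      exists a : seq nat,
        [/\ is_HJ_expansion n d a, a = rev a, odd (size a)
          & ~~ odd (nth 0%N a (size a)./2)]].

(* Main.v *)
Require Import Defs.
From mathcomp Require Import all_boot all_order all_algebra.
From mathcomp Require Import ring lra zify.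
Set Implicit Arguments. Unset Strict Implicit. Unset Printing Implicit Defensive.
Import Order.TTheory GRing.Theory Num.Theory.
Local Open Scope ring_scope.

Record M4 := mk { mP : int; mQ : int; mP' : int; mQ' : int }.

Definition mmul (x y : M4) : M4 :=
  mk (mP x * mP y - mP' x * mQ y) (mQ x * mP y - mQ' x * mQ y)
     (mP x * mP' y - mP' x * mQ' y) (mQ x * mP' y - mQ' x * mQ' y).

Definition Gm (x : nat) : M4 := mk x%:Z 1 1 0.
Definition Im : M4 := mk 1 0 0 (-1).
Definition swap (x : M4) : M4 := mk (mP x) (mP' x) (mQ x) (mQ' x).

Fixpoint mat (s : seq nat) : M4 :=
  if s is x :: s' then mmul (Gm x) (mat s') else Im.

Lemma mmulA x y z : mmul x (mmul y z) = mmul (mmul x y) z.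
Proof. case: x => ????; case: y => ????; case: z => ????; rewrite /mmul /=; congr mk; ring. Qed.

Lemma mmul1 x : mmul Im x = x.
Proof. case: x => ????; rewrite /mmul /=; congr mk; ring. Qed.

Lemma mmulr1 x : mmul x Im = x.
Proof. case: x => ????; rewrite /mmul /=; congr mk; ring. Qed.

Lemma mat_cat s t : mat (s ++ t) = mmul (mat s) (mat t).
Proof. elim: s => [|x s IH] /=; first by rewrite mmul1. by rewrite IH mmulA. Qed.

Lemma swap_mul x y : swap (mmul x y) = mmul (swap y) (swap x).
Proof. case: x => ????; case: y => ????; rewrite /mmul /swap /=; congr mk; ring. Qed.

Lemma mat_rev s : mat (rev s) = swap (mat s).
Proof.
elim: s => [|x s IH] //=.
by rewrite rev_cons -cats1 mat_cat IH /= mmulr1 swap_mul.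
Qed.

Lemma mat_det s : mP' (mat s) * mQ (mat s) - mP (mat s) * mQ' (mat s) = 1.
Proof.
elim: s => [|x s IH] /=; first by [].
apply: etrans _ IH; rewrite /mmul /=; ring.
Qed.

Lemma mat_inv s : all (fun x => 1 < x)%N s ->
  [/\ 0 <= mQ (mat s), mQ (mat s) < mP (mat s), mQ' (mat s) < mP' (mat s) & 0 <= mP' (mat s)].
Proof.
elim: s => [|x s IH] /=; first by [].
case/andP => Hx /IH [h1 h2 h3 h4].
have Hx' : 2 <= x%:Z by rewrite lez_nat.
move: (mP (mat s)) (mQ (mat s)) (mP' (mat s)) (mQ' (mat s)) h1 h2 h3 h4 => P Q P' Q' *.
split; nra.
Qed.

Lemma hjval_cons x s : hjval (x :: s) = x%:R - (hjval s)^-1.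
Proof. by case: s => //=; rewrite invr0 subr0. Qed.

Lemma hjval_mat s : all (fun x => 1 < x)%N s ->
  hjval s = (mP (mat s))%:~R / (mQ (mat s))%:~R.
Proof.
elim: s => [|x s IH]; first by rewrite /= invr0 mulr0.
rewrite [all _ _]/= => /andP[Hx Hs].
rewrite hjval_cons (IH Hs) invf_div.
have [h1 h2 _ _] := mat_inv Hs.
rewrite [mat _]/=.
have hP : (mP (mat s))%:~R != 0 :> rat.
  by rewrite intr_eq0; apply/negP => /eqP E; move: h1 h2; rewrite E; lia.
rewrite !rmorphB !rmorphM /= -pmulrn.
by field.
Qed.

Lemma exists_hj (p q : nat) : (q < p)%N -> coprime p q ->
  exists b, [/\ all (fun x => 1 < x)%N b, mP (mat b) = p%:Z & mQ (mat b) = q%:Z].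
Proof.
elim/ltn_ind: p q => p IH q Hqp Hco.
have [E|q0] := posnP q.
  subst q; move: Hco; rewrite /coprime gcdn0 => /eqP ->.
  by exists [::].
have [s0|s0] := posnP (p %% q).
  have Hq1 : q = 1%N.
    move: Hco; rewrite /coprime; have /gcdn_idPr -> : (q %| p)%N by rewrite /dvdn s0.
    by move/eqP.
  exists [:: p]; rewrite /= Hq1 andbT; split => //; last by rewrite mulr1 subr0.
  by rewrite -Hq1.
set s := (p %% q)%N in s0.
set k := (p %/ q)%N.
have Hp : p = (k * q + s)%N by rewrite /k /s -divn_eq.
have Hsq : (s < q)%N by rewrite /s ltn_mod.
have Hk : (0 < k)%N.
  rewrite lt0n; apply/negP => /eqP k0; move: Hp Hsq Hqp; rewrite k0; lia.
have Hco' : coprime q (q - s).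
  rewrite /coprime; apply/eqP; apply/eqP; rewrite -dvdn1.
  move/eqP: Hco => <-.
  have g1 := dvdn_gcdl q (q - s); have g2 := dvdn_gcdr q (q - s).
  have g3 : (gcdn q (q - s) %| s)%N.
    by have := dvdn_sub g1 g2; rewrite subKn // ltnW.
  rewrite dvdn_gcd g1 andbT Hp.
  by rewrite dvdn_add // dvdn_mull.
have [b [H1 H2 H3]] := IH q Hqp (q - s)%N ltac:(lia) Hco'.
exists (k.+1 :: b); split.
- by rewrite /= H1 andbT ltnS.
- rewrite /= H2 H3 mul1r.
  nia.
- by rewrite /= H2 mul1r mul0r subr0.
Qed.

Lemma sym_decomp (a : seq nat) : a = rev a -> odd (size a) ->
  a = take (size a)./2 a ++ nth 0%N a (size a)./2 :: rev (take (size a)./2 a).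
Proof.
move=> Ha Ho.
set h := (size a)./2.
have Hs : size a = (h.*2.+1)%N by rewrite -{1}(odd_double_half (size a)) Ho add1n.
have Hh : (h < size a)%N by rewrite Hs -addnn; lia.
have E : a = take h a ++ nth 0%N a h :: drop h.+1 a by rewrite -drop_nth // cat_take_drop.
suff H : drop h.+1 a = rev (take h a) by rewrite {1}E H.
move: Ha; rewrite {2}E rev_cat rev_cons cat_rcons {1}E => /eqP.
rewrite eqseq_cat; last by rewrite size_rev size_drop size_take Hh Hs -addnn; lia.
by case/andP => /eqP -> _; rewrite revK.
Qed.

Lemma mat_sym b c :
  mP (mat (b ++ c :: rev b)) = mP (mat b) * (c%:Z * mP (mat b) - 2 * mP' (mat b)) /\
  mQ (mat (b ++ c :: rev b)) = mP (mat b) * mQ (mat b) * c%:Z - mQ (mat b) * mP' (mat b) - mP (mat b) * mQ' (mat b).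
Proof.
rewrite mat_cat /= mat_rev.
case: (mat b) => P Q P' Q' /=.
split; ring.
Qed.

Lemma crit_F n d : critical_pair n d ->
  exists p u v q : int, [/\ n%:Z = 2 * p * u, d%:Z + 1 = 2 * p * v & d%:Z - 1 = 2 * q * u].
Proof.
case => d0 dn co [a [[_ Hall Hval] Hsym Hodd Hev]].
have Ea := sym_decomp Hsym Hodd.
set b := take _ a in Ea; set c := nth _ _ _ in Ea Hev.
have [i1 i2 _ _] := mat_inv Hall.
have Hdet := mat_det a.
have := hjval_mat Hall; rewrite Hval.
move: i1 i2 Hdet.
set N := mP (mat a); set D := mQ (mat a); set P' := mP' (mat a); set Q' := mQ' (mat a).
move=> i1 i2 Hdet Hv.
have n0 : (0 < n)%N by lia.
have nR : n%:R != 0 :> rat by rewrite pnatr_eq0 -lt0n.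
have dR : d%:R != 0 :> rat by rewrite pnatr_eq0 -lt0n.
have D0 : D != 0.
  apply/negP => /eqP E; move: Hv; rewrite E mulr0z invr0 mulr0 => /eqP.
  by rewrite mulf_eq0 invr_eq0 (negbTE nR) (negbTE dR).
have DR : D%:~R != 0 :> rat by rewrite intr_eq0.
have E1 : n%:Z * D = N * d%:Z.
  apply: (@intr_inj rat); move/eqP: Hv; rewrite eqr_div // => /eqP.
  by rewrite !rmorphM /= -!pmulrn.
have : (n%:Z %| N * d%:Z)%Z by apply/dvdzP; exists D; rewrite -E1 mulrC.
rewrite Gauss_dvdzl; last by [].
case/dvdzP => k Ek.
have ED : D = k * d%:Z.
  apply: (@mulfI _ n%:Z); first by lia.
  by rewrite E1 Ek; ring.
have k1 : k = 1.
  have : k * (P' * d%:Z - Q' * n%:Z) = 1 by rewrite -Hdet ED Ek; ring.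
  move: (P' * d%:Z - Q' * n%:Z) => X HX.
  have kp : 0 < k by nia.
  have Xp : 0 < X by nia.
  nia.
move: Ek ED; rewrite k1 !mul1r => EN ED.
have Hb : all (fun x => 1 < x)%N b by move: Hall; rewrite Ea all_cat => /andP[].
have [Hs1 Hs2] := mat_sym b c.
rewrite -Ea in Hs1 Hs2.
have Hdb := mat_det b.
move: Hs1 Hs2 Hdb.
rewrite -/N -/D EN ED.
have Ec : c = (c./2 * 2)%N by rewrite -{1}(odd_double_half c) (negbTE Hev) add0n muln2.
rewrite Ec PoszM.
set p := mP (mat b); set q := mQ (mat b); set p' := mP' (mat b); set q' := mQ' (mat b).
set c2 := Posz c./2.
move=> H1 H2 H3.
exists p, (c2 * p - p'), (q * c2 - q'), q; split.
- rewrite H1; ring.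
- rewrite H2; lia.
- rewrite H2; lia.
Qed.

Definition Hc (n d : nat) : Prop := (2 %| n)%N /\ (2 * n %| d ^ 2 - 1)%N.

Lemma F_H n d : (0 < d)%N ->
  (exists p u v q : int, [/\ n%:Z = 2 * p * u, d%:Z + 1 = 2 * p * v & d%:Z - 1 = 2 * q * u]) ->
  Hc n d.
Proof.
move=> d0 [p [u [v [q [E1 E2 E3]]]]]; split.
  have : (2%:Z %| n%:Z)%Z by apply/dvdzP; exists (p * u); rewrite E1; ring.
  by [].
have : ((2 * n)%N%:Z %| (d ^ 2 - 1)%N%:Z)%Z.
  apply/dvdzP; exists (v * q).
  rewrite -subzn; last by rewrite expn_gt0 d0.
  rewrite -[(d ^ 2)%N]/(d * d)%N !PoszM E1.
  have -> : d%:Z * d%:Z - 1 = (d%:Z + 1) * (d%:Z - 1) by ring.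
  rewrite E2 E3; ring.
by [].
Qed.

Lemma sqm1 (d : nat) : (0 < d)%N -> (d * d - 1 = d.+1 * (d - 1))%N.
Proof. move=> d0. case: d d0 => // e _. rewrite !subn1 /= !mulSn !mulnS. lia. Qed.

Lemma H_F n d : (0 < d)%N -> (0 < n)%N -> Hc n d ->
  exists p u v q : nat, [/\ (0 < p)%N, n = (2 * p * u)%N, d.+1 = (2 * p * v)%N & (d - 1)%N = (2 * q * u)%N].
Proof.
move=> d0 n0 [H2n Hd].
have Hsq : (d ^ 2 - 1 = d.+1 * (d - 1))%N by rewrite -[(d ^ 2)%N]/(d * d)%N; exact: sqm1.
have Hodd : odd d.
  have : (2 %| d ^ 2 - 1)%N by apply: dvdn_trans Hd; apply: dvdn_mulr.
  rewrite Hsq dvdn2 oddM /= negb_and negbK; case/orP => // .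
  rewrite oddB // => /negP; case: (odd d) => //.
set g := gcdn n d.+1.
have Hg2 : (2 %| g)%N by rewrite dvdn_gcd H2n dvdn2 /= negbK.
have g0 : (0 < g)%N by rewrite gcdn_gt0 n0.
have En : n = (n %/ g * g)%N by rewrite divnK // dvdn_gcdl.
have Ed : d.+1 = (d.+1 %/ g * g)%N by rewrite divnK // dvdn_gcdr.
have Eg : g = (g %/ 2 * 2)%N by rewrite divnK.
set u := (n %/ g)%N in En; set v := (d.+1 %/ g)%N in Ed; set p := (g %/ 2)%N in Eg.
have Cuv : coprime u v.
  have : (gcdn u v * g = g)%N by rewrite muln_gcdl -En -Ed.
  rewrite /coprime -{2}(mul1n g) => /eqP; rewrite eqn_pmul2r //.
have H1 : (2 * u %| v * (d - 1))%N.
  rewrite -(@dvdn_pmul2r g) //.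
  have -> : (2 * u * g = 2 * (u * g))%N by rewrite mulnA.
  have -> : (v * (d - 1) * g = v * g * (d - 1))%N by rewrite mulnAC.
  by rewrite -En -Ed -Hsq.
have H2 : (2 * u %| d - 1)%N.
  have Hd1 : (2 %| d - 1)%N by rewrite dvdn2 oddB // Hodd.
  case Ov: (odd v).
    have C : coprime (2 * u) v by rewrite coprimeMl coprime2n Ov Cuv.
    by move: H1; rewrite Gauss_dvdr.
  have Ou : odd u.
    apply/negPn/negP => Eu.
    move: Cuv; rewrite /coprime => /eqP Hg.
    have : (2 %| gcdn u v)%N by rewrite dvdn_gcd !dvdn2 Eu Ov.
    by rewrite Hg.
  rewrite Gauss_dvd ?coprime2n // Hd1 /=.
  have : (u %| v * (d - 1))%N by apply: dvdn_trans H1; apply: dvdn_mull.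
  by rewrite Gauss_dvdr.
exists p, u, v, ((d - 1) %/ (2 * u))%N; split.
- rewrite lt0n; apply/negP => /eqP p0; move: Eg g0; rewrite p0; lia.
- rewrite {1}En {1}Eg; ring.
- rewrite {1}Ed {1}Eg; ring.
- by rewrite (mulnC 2) -mulnA divnK.
Qed.

Lemma F_crit n d : (0 < d)%N -> (d < n)%N -> coprime n d ->
  (exists p u v q : nat, [/\ (0 < p)%N, n = (2 * p * u)%N, d.+1 = (2 * p * v)%N & (d - 1)%N = (2 * q * u)%N]) ->
  critical_pair n d.
Proof.
move=> d0 dn co [p [u [v [q [p0 En Ed Ed1]]]]].
move: En Ed Ed1; rewrite -!mulnA => En Ed Ed1.
have Hpv : (p * v = q * u + 1)%N by lia.
have u0 : (0 < u)%N by rewrite lt0n; apply/negP => /eqP u0; move: En; rewrite u0 muln0; lia.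
have Hvu : (v <= u)%N.
  have : (p * v <= p * u)%N by lia.
  by rewrite leq_pmul2l.
have Hqp : (q < p)%N.
  rewrite ltnNge; apply/negP => Hpq.
  have : (p * u <= q * u)%N by rewrite leq_mul2r Hpq orbT.
  have : (p * v <= p * u)%N by rewrite leq_mul2l Hvu orbT.
  lia.
have Cpq : coprime p q.
  rewrite /coprime -dvdn1.
  have := dvdn_sub (dvdn_mulr v (dvdn_gcdl p q)) (dvdn_mulr u (dvdn_gcdr p q)).
  by rewrite Hpv addKn.
have [b [Hb Hbp Hbq]] := exists_hj Hqp Cpq.
have Hdet := mat_det b.
have [_ _ _ Hp'0] := mat_inv Hb.
move: Hdet Hp'0; rewrite Hbp Hbq.
set p' := mP' (mat b); set q' := mQ' (mat b).
move=> Hdet Hp'0.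
have Hpv' : p%:Z * v%:Z = q%:Z * u%:Z + 1 by rewrite -!PoszM Hpv PoszD.
have E1 : p%:Z * (p' * v%:Z - q' * u%:Z) = u%:Z + p'.
  have -> : p%:Z * (p' * v%:Z - q' * u%:Z) = p' * (p%:Z * v%:Z) - u%:Z * (p%:Z * q') by ring.
  rewrite Hpv'.
  have -> : p%:Z * q' = p' * q%:Z - 1 by rewrite -Hdet; ring.
  ring.
have E2 : q%:Z * (p' * v%:Z - q' * u%:Z) = v%:Z + q'.
  have -> : q%:Z * (p' * v%:Z - q' * u%:Z) = v%:Z * (p' * q%:Z) - q' * (q%:Z * u%:Z) by ring.
  have -> : q%:Z * u%:Z = p%:Z * v%:Z - 1 by rewrite Hpv'; ring.
  have -> : p' * q%:Z = p%:Z * q' + 1 by rewrite -Hdet; ring.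
  ring.
have [k [Ek1 Ek2 k0]] : exists k : nat, [/\ p%:Z * k%:Z = u%:Z + p', q%:Z * k%:Z = v%:Z + q' & (0 < k)%N].
  move: E1 E2; case: (p' * v%:Z - q' * u%:Z) => [k|k] E1 E2.
    exists k; split => //; rewrite lt0n; apply/negP => /eqP k0.
    move: E1; rewrite k0 mulr0; lia.
  exfalso; move: E1; rewrite NegzE; nia.
set c := (2 * k)%N.
set a := b ++ c :: rev b.
have Hc2 : (1 < c)%N by rewrite /c; lia.
split => //; exists a; split.
- split.
  + by rewrite /a size_cat /= addnS.
  + by rewrite /a all_cat /= all_rev Hb Hc2.
  + rewrite hjval_mat; last by rewrite /a all_cat /= all_rev Hb Hc2.
    have [-> ->] := mat_sym b c.
    rewrite Hbp Hbq -/p' -/q'.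
    have -> : p%:Z * (c%:Z * p%:Z - 2 * p') = n%:Z.
      rewrite En /c !PoszM.
      have -> : p%:Z * (2%:Z * k%:Z * p%:Z - 2 * p') = 2 * p%:Z * (p%:Z * k%:Z - p') by ring.
      rewrite Ek1; ring.
    have -> : p%:Z * q%:Z * c%:Z - q%:Z * p' - p%:Z * q' = d%:Z.
      have -> : d%:Z = (d - 1)%N%:Z + 1 by rewrite -subzn //; ring.
      rewrite Ed1 /c !PoszM.
      have -> : p%:Z * q%:Z * (2%:Z * k%:Z) - q%:Z * p' - p%:Z * q' = 2 * q%:Z * (p%:Z * k%:Z) - q%:Z * p' - p%:Z * q' by ring.
      rewrite Ek1.
      have -> : p%:Z * q' = p' * q%:Z - 1 by rewrite -Hdet; ring.
      ring.
    by rewrite -!pmulrn.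
- by rewrite /a rev_cat rev_cons revK cat_rcons.
- by rewrite /a size_cat /= size_rev addnS oddS oddD addbb.
- have -> : (size a)./2 = size b.
    by rewrite /a size_cat /= size_rev addnS addnn /= uphalf_double.
  by rewrite /a nth_cat ltnn subnn /= /c oddM.
Qed.

Lemma crit_iff n d : (0 < d)%N ->
  critical_pair n d <-> [/\ (d < n)%N, coprime n d & Hc n d].
Proof.
move=> d0; split.
  move=> Hcr; have := Hcr; case=> _ dn co _; split => //.
  exact: F_H d0 (crit_F Hcr).
case=> dn co H.
apply: F_crit => //.
apply: H_F => //; lia.
Qed.

Lemma sq_shift N x y : (2 %| N)%N -> (x = y %[mod N])%N -> (0 < x)%N -> (0 < y)%N ->
  (2 * N %| x ^ 2 - 1)%N -> (2 * N %| y ^ 2 - 1)%N.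
Proof.
move=> H2 Hm x0 y0 Hx.
have : ((2 * N)%N%:Z %| (x ^ 2 - 1)%N%:Z)%Z by [].
case/dvdzP => K HK.
suff : ((2 * N)%N%:Z %| (y ^ 2 - 1)%N%:Z)%Z by [].
apply/dvdzP.
have [N2 EN] : exists N2, N = (2 * N2)%N by exists (N %/ 2)%N; rewrite mulnC divnK.
have Ex : x%:Z = (x %/ N)%N%:Z * N%:Z + (x %% N)%N%:Z by rewrite -PoszM -PoszD -divn_eq.
have Ey : y%:Z = (y %/ N)%N%:Z * N%:Z + (x %% N)%N%:Z by rewrite Hm -PoszM -PoszD -divn_eq.
set t := (x %/ N)%N%:Z - (y %/ N)%N%:Z.
have Exy : y%:Z = x%:Z - t * N%:Z by rewrite Ex Ey /t; ring.
move: HK; rewrite -!subzn ?expn_gt0 ?x0 ?y0 // -[(x ^ 2)%N]/(x * x)%N -[(y ^ 2)%N]/(y * y)%N !PoszM => HK.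
exists (K - t * x%:Z + t * t * N2%:Z).
rewrite Exy.
have -> : (x%:Z - t * N%:Z) * (x%:Z - t * N%:Z) - 1 = (x%:Z * x%:Z - 1) - 2 * t * x%:Z * N%:Z + t * t * N%:Z * N%:Z by ring.
rewrite HK EN PoszM; ring.
Qed.

Theorem corollary1p7 (n d n' m d' : nat) :
  (1 <= d)%N -> (d <= n)%N -> coprime n d -> (d ^ 2 = 1 %[mod n])%N ->
  (0 < n')%N -> (0 < m)%N -> n = (n' * m)%N -> odd m ->
  (1 <= d')%N -> (d' <= n')%N -> (d' = d %[mod n'])%N ->
  (critical_pair n d <-> critical_pair n' d').
Proof.
move=> d0 dn co Hsq n'0 m0 En Om d'0 dn' Hmod.
rewrite !crit_iff //.
have Hn'n : (n' %| n)%N by rewrite En dvdn_mulr.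
have co' : coprime n' d'.
  by rewrite -coprime_modr Hmod coprime_modr (coprime_dvdl Hn'n co).
split.
  case=> _ _ [H2n Hd].
  have H2n' : (2 %| n')%N by move: H2n; rewrite En Gauss_dvdl // coprime2n.
  split => //.
  - rewrite ltn_neqAle dn' andbT; apply/negP => /eqP E.
    move: co'; rewrite E /coprime gcdnn => /eqP E1.
    by move: H2n'; rewrite E1.
  - split => //.
    apply: (sq_shift H2n' (esym Hmod)) => //.
    apply: dvdn_trans Hd.
    by rewrite dvdn_pmul2l.
case=> _ _ [H2n' Hd'].
have H2n : (2 %| n)%N by apply: dvdn_trans Hn'n.
have Hnd : (n %| d ^ 2 - 1)%N.
  by rewrite -eqn_mod_dvd ?expn_gt0 ?d0 //; apply/eqP.
have Hd2 : (2 * n' %| d ^ 2 - 1)%N by apply: (sq_shift H2n' Hmod) => //.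
split => //.
- rewrite ltn_neqAle dn andbT; apply/negP => /eqP E.
  move: co; rewrite E /coprime gcdnn => /eqP E1.
  by move: H2n; rewrite E1.
- split => //.
  have Hn'X : (n' %| d ^ 2 - 1)%N by apply: dvdn_trans Hd2; apply: dvdn_mull.
  rewrite -(divnK Hn'X) in Hd2 Hnd *.
  set Y := ((d ^ 2 - 1) %/ n')%N in Hd2 Hnd *.
  have H2Y : (2 %| Y)%N by move: Hd2; rewrite dvdn_pmul2r.
  have HmY : (m %| Y)%N by move: Hnd; rewrite En (mulnC Y) dvdn_pmul2l.
  have : (2 * m %| Y)%N by rewrite Gauss_dvd ?coprime2n // H2Y HmY.
  rewrite En -(@dvdn_pmul2r n') // => H.
  by have -> : (2 * (n' * m) = 2 * m * n')%N by rewrite mulnCA mulnC.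
Qed.
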